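(* Let $\Phi$ be an irreducible root system with ambient real vector space $\mathbb R\Phi$. Then $\Phi$ is not contained in the union of two hyperplanes (linear subspaces of codimension $1$) of $\mathbb R\Phi$. Moreover, if $H\le\mathbb R\Phi$ is a hyperplane and $\alpha\in\Phi\cap H$, then $\alpha$ has a neighbor in $\Phi\setminus H$.
   Context: Root systems are crystallographic, possibly non-reduced (components of type $\mathsf{BC}_\ell$ are allowed). Two roots $\alpha,\beta$ are called neighbors if they are linearly independent, non-orthogonal, and no root lies in the open cone $\mathbb R_{>0}\alpha+\mathbb R_{>0}\beta$. *)

(* Defs.v *)
From mathcomp Require Import all_boot all_order all_algebra.
From mathcomp Require Import reals.
Set Implicit Arguments. Unset Strict Implicit. Unset Printing Implicit Defensive.
Import Order.TTheory GRing.Theory Num.Theory.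
Local Open Scope ring_scope.

Definition dotv (R : realType) (n : nat) (u v : 'rV[R]_n) : R := (u *m v^T) 0 0.

Definition cartan (R : realType) (n : nat) (b a : 'rV[R]_n) : R :=
  2 * dotv b a / dotv a a.

(* A (finite, crystallographic, possibly non-reduced) root system in 'rV[R]_n,
   whose ambient space R Phi is the whole space 'rV[R]_n. *)
Definition root_system (R : realType) (n : nat) (Phi : seq 'rV[R]_n) : Prop :=
  [/\ (<<Phi>>%VS = fullv),
      0 \notin Phi,
      (forall a b, a \in Phi -> b \in Phi -> b - cartan b a *: a \in Phi) &
      (forall a b, a \in Phi -> b \in Phi -> exists z : int, cartan b a = z%:~R)].

Definition irreducible_rs (R : realType) (n : nat) (Phi : seq 'rV[R]_n) : Prop :=
  root_system Phi /\ Phi != [::] /\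
  ~ (exists P : pred 'rV[R]_n,
        (exists2 a, a \in Phi & P a) /\ (exists2 b, b \in Phi & ~~ P b) /\
        (forall a b, a \in Phi -> b \in Phi -> P a -> ~~ P b -> dotv a b = 0)).

Definition hyperplane (R : realType) (n : nat) (H : {vspace 'rV[R]_n}) : Prop :=
  (\dim H).+1 = n.

Definition neighbors (R : realType) (n : nat) (Phi : seq 'rV[R]_n) (a b : 'rV[R]_n) : Prop :=
  [/\ free [:: a; b], dotv a b != 0 &
      ~ (exists c, exists x : R, exists y : R,
            [/\ c \in Phi, 0 < x, 0 < y & c = x *: a + y *: b])].

(* Main.v *)
Require Import Defs.
From mathcomp Require Import all_boot all_order all_algebra.
From mathcomp Require Import reals boolp.
From mathcomp Require Import ring lra.
Set Implicit Arguments. Unset Strict Implicit. Unset Printing Implicit Defensive.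
Import Order.TTheory GRing.Theory Num.Theory.
Local Open Scope ring_scope.

Section S.
Variables (R : realType) (n : nat).
Implicit Types (u v w : 'rV[R]_n).

Lemma dotvE u v : dotv u v = \sum_i u 0 i * v 0 i.
Proof. by rewrite /dotv !mxE; apply: eq_bigr => i _; rewrite mxE. Qed.

Lemma dotvC u v : dotv u v = dotv v u.
Proof. by rewrite !dotvE; apply: eq_bigr => i _; rewrite mulrC. Qed.

Lemma dotvDl u v w : dotv (u + v) w = dotv u w + dotv v w.
Proof. by rewrite /dotv mulmxDl mxE. Qed.

Lemma dotvZl k u w : dotv (k *: u) w = k * dotv u w.
Proof. by rewrite /dotv -scalemxAl mxE. Qed.

Lemma dotvNl u w : dotv (- u) w = - dotv u w.
Proof. by rewrite -scaleN1r dotvZl mulN1r. Qed.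

Lemma dotvBl u v w : dotv (u - v) w = dotv u w - dotv v w.
Proof. by rewrite dotvDl dotvNl. Qed.

Lemma dotvv_eq0 u : (dotv u u == 0) = (u == 0).
Proof.
apply/idP/idP; last by move/eqP->; rewrite dotvE big1 // => i _; rewrite mxE mul0r.
rewrite dotvE => /eqP H; apply/eqP/rowP => i; rewrite mxE.
have := psumr_eq0P (P := xpredT) (F := fun i => u 0 i * u 0 i) _ H.
move=> /(_ (fun j _ => sqr_ge0 (u 0 j))) /(_ i isT) /eqP.
by rewrite mulf_eq0 orbb => /eqP.
Qed.

Lemma dotvv_ge0 u : 0 <= dotv u u.
Proof. by rewrite dotvE sumr_ge0 // => i _; rewrite -expr2 sqr_ge0. Qed.

Lemma dimrV : \dim (fullv : {vspace 'rV[R]_n}) = n.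
Proof. by rewrite dimvf /dim /= mul1n. Qed.

End S.
Section Core.
Variables (R : realType) (n : nat) (Phi : seq 'rV[R]_n).
Hypothesis hirr : irreducible_rs Phi.

Let hrs : root_system Phi. Proof. by case: hirr. Qed.

Lemma nz_root a : a \in Phi -> a != 0.
Proof. by case: hrs => _ h0 _ _ aP; apply: contraNneq h0 => <-. Qed.

Lemma refl_root a b : a \in Phi -> b \in Phi -> b - cartan b a *: a \in Phi.
Proof. by case: hrs => _ _ h _; apply: h. Qed.

Lemma dotaa_neq0 a : a \in Phi -> dotv a a != 0.
Proof. by move=> /nz_root; rewrite dotvv_eq0. Qed.

Lemma cartan_neq0 a b : a \in Phi -> dotv b a != 0 -> cartan b a != 0.
Proof.
move=> aP hba; rewrite /cartan mulf_neq0 ?mulf_neq0 ?invr_eq0 ?dotaa_neq0 //.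
by rewrite pnatr_eq0.
Qed.

Lemma dot_refl a b : a \in Phi -> dotv (b - cartan b a *: a) a = - dotv b a.
Proof.
move=> aP; rewrite dotvBl dotvZl /cartan.
have := dotaa_neq0 aP; set d := dotv a a => hd.
by field.
Qed.

Lemma core (Q1 Q2 : pred 'rV[R]_n) :
  (forall k u v, Q1 u -> Q1 v -> Q1 (u + k *: v)) ->
  (forall k u, Q1 u -> Q1 (k *: u)) ->
  (forall k u v, Q2 u -> Q2 v -> Q2 (u + k *: v)) ->
  (forall k u, Q2 u -> Q2 (k *: u)) ->
  (exists2 r, r \in Phi & ~~ Q1 r) -> (exists2 r, r \in Phi & ~~ Q2 r) ->
  exists2 r, r \in Phi & ~~ Q1 r && ~~ Q2 r.
Proof.
move=> hD1 hZ1 hD2 hZ2 [r1 r1P nQ1] [r2 r2P nQ2].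
case: (boolP (has (fun r => ~~ Q1 r && ~~ Q2 r) Phi)) => [/hasP[r rP hr]|hn].
  by exists r.
exfalso.
have cov : forall r, r \in Phi -> Q1 r || Q2 r.
  move=> r rP; move/hasPn: hn => /(_ r rP).
  by case: (Q1 r); case: (Q2 r).
have Q2r1 : Q2 r1 by have := cov _ r1P; rewrite (negbTE nQ1).
have Q1r2 : Q1 r2 by have := cov _ r2P; rewrite (negbTE nQ2) orbF.
case: (boolP (has (fun a => [&& Q1 a, ~~ Q2 a &
      has (fun b => [&& Q2 b, ~~ Q1 b & dotv a b != 0]) Phi]) Phi)).
  move=> /hasP[a aP /and3P[Q1a nQ2a /hasP[b bP /and3P[Q2b nQ1b hab]]]].
  have sP := refl_root aP bP.
  have hc : cartan b a != 0 by apply: cartan_neq0 => //; rewrite dotvC.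
  case/orP: (cov _ sP) => hs.
    have := hD1 (cartan b a) _ _ hs Q1a.
    by rewrite subrK (negbTE nQ1b).
  have := hD2 (-1) _ _ Q2b hs; rewrite scaleN1r opprB addrC subrK => h.
  have := hZ2 (cartan b a)^-1 _ h; rewrite scalerA mulVf // scale1r.
  by rewrite (negbTE nQ2a).
move=> hn2.
have AB : forall a b, a \in Phi -> b \in Phi -> Q1 a -> ~~ Q2 a -> Q2 b -> ~~ Q1 b ->
    dotv a b = 0.
  move=> a b aP bP Q1a nQ2a Q2b nQ1b; apply/eqP; apply: contraNT hn2 => hab.
  by apply/hasP; exists a => //; rewrite Q1a nQ2a /=; apply/hasP; exists b => //;
    rewrite Q2b nQ1b.
case: hirr => _ [_]; apply.
exists (fun x => has (fun a => [&& Q1 a, ~~ Q2 a & dotv x a != 0]) Phi).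
split.
  exists r2 => //; apply/hasP; exists r2 => //.
  by rewrite Q1r2 nQ2 dotaa_neq0.
split.
  exists r1 => //; apply/hasPn => a aP; apply/negP => /and3P[Q1a nQ2a].
  by rewrite dotvC (AB a r1) ?eqxx.
move=> x y xP yP /hasP[a aP /and3P[Q1a nQ2a hxa]] /hasPn hy.
have ya : forall a, a \in Phi -> Q1 a -> ~~ Q2 a -> dotv y a = 0.
  move=> a' a'P Q1a' nQ2a'; have := hy a' a'P.
  by rewrite Q1a' nQ2a' /= negbK => /eqP.
case: (boolP (Q2 x)) => Q2x; last first.
  have Q1x : Q1 x by have := cov _ xP; rewrite (negbTE Q2x) orbF.
  by rewrite dotvC ya.
case: (boolP (Q1 x)) => Q1x; last first.
  by move: hxa; rewrite dotvC (AB a x) ?eqxx.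
set a' := a - cartan a x *: x.
have a'P : a' \in Phi by apply: refl_root.
have Q1a' : Q1 a' by rewrite /a' -scaleNr; apply: hD1.
have nQ2a' : ~~ Q2 a'.
  apply: contra nQ2a => h; have := hD2 (cartan a x) _ _ h Q2x.
  by rewrite /a' subrK.
have := ya _ a'P Q1a' nQ2a'; rewrite /a' dotvC dotvBl dotvZl dotvC (dotvC x y).
rewrite (ya a) // sub0r => /eqP; rewrite oppr_eq0 mulf_eq0.
rewrite (negbTE (cartan_neq0 (b:=a) xP _)) ?/= => [/eqP|]; last by rewrite dotvC.
done.
Qed.
End Core.
Section Main.
Variables (R : realType) (n : nat) (Phi : seq 'rV[R]_n).
Hypothesis hirr : irreducible_rs Phi.

Lemma not_sub (H : {vspace 'rV[R]_n}) : hyperplane H ->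
  exists2 r, r \in Phi & r \notin H.
Proof.
rewrite /hyperplane => hH.
case: (boolP (has (fun r => r \notin H) Phi)) => [/hasP[r rP hr]|hn].
  by exists r.
exfalso.
have : (<<Phi>> <= H)%VS.
  by apply/span_subvP => r rP; move/hasPn: hn => /(_ r rP); rewrite negbK.
case: hirr => -[-> _ _ _] _ /dimvS; rewrite dimrV => hle.
by move: hle; rewrite -{1}hH ltnn.
Qed.

Definition cone (a c v : 'rV[R]_n) :=
  exists x y : R, [/\ 0 < x, 0 < y & v = x *: a + y *: c].

Lemma count_lt (P1 P2 : pred 'rV[R]_n) (s : seq 'rV[R]_n) e :
  (forall v, P1 v -> P2 v) -> e \in s -> P2 e -> ~~ P1 e ->
  (count P1 s < count P2 s)%N.
Proof.
move=> sub; elim: s => // x s IH; rewrite inE => /orP[/eqP->|es] h2 h1 /=.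
  by rewrite h2 (negbTE h1) add0n add1n ltnS; apply: sub_count.
have := IH es h2 h1; case: (boolP (P1 x)) => h.
  by rewrite (sub _ h) => ?; rewrite ltn_add2l.
by move=> ?; rewrite add0n; apply: (leq_trans _ (leq_addl _ _)).
Qed.

Variables (H : {vspace 'rV[R]_n}) (a : 'rV[R]_n).
Hypotheses (aH : a \in H) (aP : a \in Phi).

Lemma step (c : 'rV[R]_n) : c \in Phi -> c \notin H -> 0 < dotv a c ->
  neighbors Phi a c \/
  exists2 e, [/\ e \in Phi, e \notin H & 0 < dotv a e] &
    (count (fun v => `[< cone a e v >]) Phi < count (fun v => `[< cone a c v >]) Phi)%N.
Proof.
move=> cP cH hac.
have a0 : a != 0 by apply: (nz_root hirr).
case: (pselect (exists e x y, [/\ e \in Phi, 0 < x, 0 < y & e = x *: a + y *: c]));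
  last first.
  move=> hno; left; split => //; last by rewrite gt_eqF.
  rewrite free_cons seq1_free span_seq1 andbC.
  have c0 : c != 0 by apply: contraNneq cH => ->; rewrite mem0v.
  rewrite c0 /=; apply/vlineP => -[k ak].
  have k0 : k != 0 by apply: contraNneq a0 => k0; rewrite ak k0 scale0r.
  move: cH; rewrite -[c](scale1r) -(mulVf k0) -scalerA -ak.
  by rewrite memvZ.
move=> [e [s [t [eP s0 t0 ee]]]].
have eH : e \notin H.
  apply: contraNN cH => eH.
  have : (t^-1 *: (e - s *: a)) \in H by rewrite memvZ // memvB // memvZ.
  by rewrite ee addrC addKr scalerA mulVf ?gt_eqF // scale1r.
right; exists e.
  split => //.
  rewrite ee dotvC dotvDl !dotvZl (dotvC c).
  apply: ltr_wpDl; first exact: mulr_ge0 (ltW s0) (dotvv_ge0 _).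
  by rewrite mulr_gt0.
apply: (count_lt (e := e)) => //.
- move=> v /asboolP[p [q [p0 q0 ->]]]; apply/asboolP.
  exists (p + q * s), (q * t); split.
  + by rewrite addr_gt0 // mulr_gt0.
  + by rewrite mulr_gt0.
  rewrite ee scalerDr !scalerA addrA -scalerDl.
  done.
- by apply/asboolP; exists s, t.
apply/asboolP => -[p [q [p0 q0 he]]].
have : (1 - q) *: e = p *: a by rewrite scalerBl scale1r {1}he addrK.
have [q1|q1] := eqVneq (1 - q) 0.
  by rewrite q1 scale0r => /esym/eqP; rewrite scaler_eq0 gt_eqF //= (negbTE a0).
move=> he2; move/negP: eH; apply.
have : (1 - q)^-1 *: ((1 - q) *: e) \in H by rewrite he2 !memvZ.
by rewrite scalerA mulVf // scale1r.
Qed.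
Lemma descent k c : c \in Phi -> c \notin H -> 0 < dotv a c ->
  (count (fun v => `[< cone a c v >]) Phi <= k)%N ->
  exists2 b, (b \in Phi) && (b \notin H) & neighbors Phi a b.
Proof.
elim: k c => [|k IH] c cP cH hac hk;
  (case: (step cP cH hac) => [hn|[e [eP eH he] hlt]]; first by exists c; rewrite ?cP).
  by move: (leq_trans hlt hk).
by apply: (IH e) => //; rewrite -ltnS (leq_trans hlt hk).
Qed.

Lemma start : hyperplane H -> exists2 c, (c \in Phi) && (c \notin H) & 0 < dotv a c.
Proof.
move=> hH.
have [c cP /andP[cH ca]] : exists2 c, c \in Phi & (c \notin H) && ~~ (dotv c a == 0).
  apply: (core hirr (Q1 := fun x => x \in H) (Q2 := fun x => dotv x a == 0)).
  - by move=> k u v hu hv; rewrite memvD // memvZ.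
  - by move=> k u hu; rewrite memvZ.
  - by move=> k u v /eqP hu /eqP hv /=; rewrite dotvDl dotvZl hu hv mulr0 addr0.
  - by move=> k u /eqP hu /=; rewrite dotvZl hu mulr0.
  - exact: not_sub.
  - by exists a => //; rewrite /= (dotaa_neq0 hirr aP).
have [pos|neg] := ltrP 0 (dotv a c).
  by exists c => //; rewrite cP cH.
have hlt : dotv a c < 0 by rewrite lt_neqAle neg andbT dotvC.
exists (c - cartan c a *: a).
  rewrite (refl_root hirr) //=; apply: contraNN cH => h.
  by have := memvD h (memvZ (cartan c a) aH); rewrite subrK.
by rewrite dotvC (dot_refl hirr) // dotvC oppr_gt0.
Qed.
End Main.

Theorem lemma1 (R : realType) (n : nat) (Phi : seq 'rV[R]_n) :
  irreducible_rs Phi ->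
  (~ exists H1 H2 : {vspace 'rV[R]_n},
       [/\ hyperplane H1, hyperplane H2 &
           forall a, a \in Phi -> (a \in H1) || (a \in H2)]) /\
  (forall (H : {vspace 'rV[R]_n}) (a : 'rV[R]_n),
       hyperplane H -> a \in Phi -> a \in H ->
       exists2 b, (b \in Phi) && (b \notin H) & neighbors Phi a b).
Proof.
move=> hirr; split.
  move=> [H1 [H2 [h1 h2 hcov]]].
  have [r rP /andP[n1 n2]] := core hirr (Q1 := fun x => x \in H1)
     (Q2 := fun x => x \in H2)
     (fun k u v hu hv => memvD hu (memvZ k hv)) (fun k u hu => memvZ k hu)
     (fun k u v hu hv => memvD hu (memvZ k hv)) (fun k u hu => memvZ k hu)
     (not_sub hirr h1) (not_sub hirr h2).
  by move: (hcov r rP); rewrite (negbTE n1) (negbTE n2).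
move=> H a hH aP aH.
have [c /andP[cP cH] hac] := start hirr aH aP hH.
exact: (descent hirr aH aP cP cH hac (leqnn _)).
Qed.
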